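(* Let $(A,\succ,\prec)$ be an anti-pre-Novikov algebra and $s\in A\otimes A$, and write $T=T_{s+\tau(s)}$. The following are equivalent: (a) $s+\tau(s)$ is invariant; (b) $T(L_{\succ}^*(x)\zeta)+L_{\star}(x)T(\zeta)=0$ and $T(L_{\circ}^*(x)\zeta)+L_{\odot}(x)T(\zeta)=0$ for all $x\in A,\zeta\in A^*$; (c) $L_{\succ}(x)T(\zeta)+T(L_{\star}^*(x)\zeta)=0$ and $T(L_{\odot}^*(x)\zeta)+L_{\circ}(x)T(\zeta)=0$ for all $x\in A,\zeta\in A^*$; (d) $L_{\star}^*(T(\zeta))\eta=R_{\succ}^*(T(\eta))\zeta$ and $R_{\odot}^*(T(\zeta))\eta=R_{\circ}^*(T(\eta))\zeta$ for all $\zeta,\eta\in A^*$.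
   Context: $A$ is finite-dimensional over a field $k$. An anti-pre-Novikov algebra is $(A,\succ,\prec)$ such that with $x\circ y=x\succ y+x\prec y$: $(x\circ y-y\circ x)\succ z=y\succ(x\succ z)-x\succ(y\succ z)$; $x\prec(y\circ z)=(y\succ x)\prec z-(x\prec y)\prec z-y\succ(x\prec z)$; $(x\circ y)\succ z=-(x\succ z)\prec y$; $(x\prec y)\prec z=(x\prec z)\prec y$; $(x\circ y-y\circ x)\prec z=x\succ(y\circ z)-y\succ(x\circ z)$. Notation: $L_\ast(x)y=x\ast y$, $R_\ast(x)y=y\ast x$ for $\ast\in\{\succ,\prec,\circ\}$; $L_{\star}=L_{\circ}+R_{\circ}$, $L_{\odot}=L_{\succ}+R_{\prec}$, $R_{\odot}=R_{\succ}+L_{\prec}$; for $f:A\to\mathrm{End}(A)$, $\langle f^*(x)\zeta,y\rangle=-\langle\zeta,f(x)y\rangle$; $\tau$ is the flip; for $r\in A\otimes A$, $T_r:A^*\to A$ is $\langle T_r(\zeta),\eta\rangle=\langle r,\zeta\otimes\eta\rangle$. An element $r\in A\otimes A$ is invariant if $(I\otimes L_{\star}(x)-L_{\succ}(x)\otimes I)r=0$ and $(L_{\circ}(x)\otimes I-I\otimes L_{\odot}(x))r=0$ for all $x\in A$. *)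

(* Defs.v *)
(* The finite-dimensional algebra A over the field K is
   modelled in coordinates as 'rV[K]_n (a basis e_0..e_{n-1} fixed);
   A^star is also 'rV[K]_n with the pairing <zeta, x> = sum_i zeta_i x_i;
   A (x) A is 'M[K]_n, the matrix r standing for sum_{i,j} r i j e_i (x) e_j. *)
From HB Require Import structures.
From mathcomp Require Import all_boot all_order all_algebra.
Set Implicit Arguments. Unset Strict Implicit. Unset Printing Implicit Defensive.
Import Order.TTheory GRing.Theory Num.Theory.
Local Open Scope ring_scope.

Section Defs.
Variables (K : fieldType) (n : nat).
Local Notation V := 'rV[K]_n.

Definition bvec (i : 'I_n) : V := delta_mx 0 i.

Definition bil (c : 'I_n -> 'I_n -> V) (x y : V) : V :=
  \sum_(i < n) \sum_(j < n) (x 0 i * y 0 j) *: c i j.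

Definition pairing (zeta x : V) : K := \sum_(i < n) zeta 0 i * x 0 i.

Section Ops.
Variables (succ prec : V -> V -> V).
Definition circ (x y : V) : V := succ x y + prec x y.

Definition anti_pre_Novikov : Prop :=
  (forall x y z, succ (circ x y - circ y x) z = succ y (succ x z) - succ x (succ y z)) /\
  (forall x y z, prec x (circ y z) =
                 prec (succ y x) z - prec (prec x y) z - succ y (prec x z)) /\
  (forall x y z, succ (circ x y) z = - prec (succ x z) y) /\
  (forall x y z, prec (prec x y) z = prec (prec x z) y) /\
  (forall x y z, prec (circ x y - circ y x) z = succ x (circ y z) - succ y (circ x z)).

Definition Lop (m : V -> V -> V) (x : V) : V -> V := fun y => m x y.
Definition Rop (m : V -> V -> V) (x : V) : V -> V := fun y => m y x.
Definition addop (f g : V -> V -> V) (x : V) : V -> V := fun y => f x y + g x y.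

Definition L_succ := Lop succ.
Definition R_succ := Rop succ.
Definition L_prec := Lop prec.
Definition R_prec := Rop prec.
Definition L_circ := Lop circ.
Definition R_circ := Rop circ.
Definition L_star := addop L_circ R_circ.
Definition L_odot := addop L_succ R_prec.
Definition R_odot := addop R_succ L_prec.
End Ops.

(* dual operator f^star : A -> End(A^star),  <f^star(x) zeta, y> = - <zeta, f(x) y> *)
Definition dualop (f : V -> V -> V) (x zeta : V) : V :=
  \row_(i < n) - pairing zeta (f x (bvec i)).

Definition flip (r : 'M[K]_n) : 'M[K]_n := r^T.

(* (f (x) g) r, for linear maps f g : A -> A *)
Definition tapp (f g : V -> V) (r : 'M[K]_n) : 'M[K]_n :=
  \matrix_(a < n, b < n)
    \sum_(i < n) \sum_(j < n) r i j * (f (bvec i)) 0 a * (g (bvec j)) 0 b.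

(* T_r : A^star -> A,  <T_r(zeta), eta> = <r, zeta (x) eta> *)
Definition Tmap (r : 'M[K]_n) (zeta : V) : V :=
  \row_(j < n) \sum_(i < n) zeta 0 i * r i j.

Definition invariant_tensor (succ prec : V -> V -> V) (r : 'M[K]_n) : Prop :=
  forall x : V,
    tapp id (L_star succ prec x) r - tapp (L_succ succ x) id r = 0 /\
    tapp (L_circ succ prec x) id r - tapp id (L_odot succ prec x) r = 0.

End Defs.

(* Main.v *)
Require Import Defs.
From HB Require Import structures.
From mathcomp Require Import all_boot all_order all_algebra.
Set Implicit Arguments. Unset Strict Implicit. Unset Printing Implicit Defensive.
Import Order.TTheory GRing.Theory Num.Theory.
Local Open Scope ring_scope.

Section H.
Variables (K : fieldType) (n : nat).
Local Notation V := 'rV[K]_n.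
Definition mxof (F : V -> V) : 'M[K]_n := \matrix_(j, b) F (@bvec K n j) 0 b.
Definition islin (F : V -> V) := forall v, F v = v *m mxof F.

Lemma bvecE j k : (@bvec K n j) 0 k = (k == j)%:R :> K.
Proof. by rewrite /bvec mxE eqxx. Qed.

Lemma bil_bvec_r c x j : bil c x (@bvec K n j) = \sum_i x 0 i *: c i j.
Proof.
rewrite /bil; apply: eq_bigr => i _.
rewrite (bigD1 j) //= big1 ?addr0; first by rewrite bvecE eqxx mulr1.
by move=> k /negbTE hk; rewrite bvecE hk mulr0 scale0r.
Qed.

Lemma bil_bvec_l c y i : bil c (@bvec K n i) y = \sum_j y 0 j *: c i j.
Proof.
rewrite /bil (bigD1 i) //= [X in _ + X]big1 ?addr0.
  by apply: eq_bigr => j _; rewrite bvecE eqxx mul1r.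
move=> k hk; apply: big1 => j _.
by rewrite bvecE (negbTE hk) mul0r scale0r.
Qed.

Lemma bil_lin_r c x : islin (bil c x).
Proof.
move=> v; apply/rowP => b; rewrite [RHS]mxE.
under eq_bigr => j _ do rewrite mxE bil_bvec_r summxE mulr_sumr.
rewrite exchange_big /bil summxE /=.
apply: eq_bigr => k _; rewrite summxE.
by apply: eq_bigr => i _; rewrite !mxE mulrA (mulrC _ (v 0 i)).
Qed.

Lemma bil_lin_l c y : islin (fun x => bil c x y).
Proof.
move=> v; apply/rowP => b; rewrite [RHS]mxE.
under eq_bigr => j _ do rewrite mxE bil_bvec_l summxE mulr_sumr.
rewrite /bil summxE /=.
apply: eq_bigr => k _; rewrite summxE.
by apply: eq_bigr => j _; rewrite !mxE mulrA.
Qed.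

Lemma mxofD (F G : V -> V) : mxof (fun v => F v + G v) = mxof F + mxof G.
Proof. by apply/matrixP => i j; rewrite !mxE. Qed.

Lemma islinD F G : islin F -> islin G -> islin (fun v => F v + G v).
Proof. by move=> hF hG v; rewrite mxofD mulmxDr -hF -hG. Qed.

Lemma mxof_id : mxof id = 1%:M.
Proof. by apply/matrixP => i j; rewrite !mxE /= eq_sym. Qed.

Lemma tappE F G r : tapp F G r = (mxof F)^T *m r *m mxof G.
Proof.
apply/matrixP => a b; rewrite !mxE.
under [RHS]eq_bigr => j _ do rewrite mxE mulr_suml.
rewrite [RHS]exchange_big; apply: eq_bigr => i _; apply: eq_bigr => j _.
by rewrite !mxE; congr (_ * _); exact: mulrC.
Qed.

Lemma dualopE f x eta : dualop f x eta = - (eta *m (mxof (f x))^T).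
Proof.
apply/rowP => i; rewrite !mxE /pairing; congr (- _); apply: eq_bigr => k _.
by rewrite !mxE.
Qed.

Lemma TmapE (r : 'M[K]_n) (z : V) : Tmap r z = z *m r.
Proof. by apply/rowP => j; rewrite !mxE. Qed.


Definition form (z : V) (M : 'M[K]_n) (w : V) : K := (z *m M *m w^T) 0 0.

Lemma formB z A B w : form z (A - B) w = form z A w - form z B w.
Proof. by rewrite /form mulmxBr mulmxBl [LHS]mxE [X in _ + X]mxE. Qed.

Lemma form_tr z M w : form w M z = form z M^T w.
Proof.
rewrite /form; have -> : (w *m M *m z^T) 0 0 = ((w *m M *m z^T)^T) 0 0 by rewrite [RHS]mxE.
by rewrite !trmx_mul trmxK mulmxA.
Qed.

Lemma formE a M b : form (@bvec K n a) M (@bvec K n b) = M a b.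
Proof.
by rewrite /form /bvec -rowE trmx_delta -colE !mxE.
Qed.

Lemma form0 M : (forall z w, form z M w = 0) -> M = 0.
Proof. by move=> h; apply/matrixP => a b; rewrite -formE h mxE. Qed.

Lemma rowall0 (M : 'M[K]_n) : (forall z : V, z *m M = 0) <-> M = 0.
Proof.
split; last by move=> -> z; rewrite mulmx0.
move=> h; apply/row_matrixP => i; rewrite rowE h.
by apply/rowP => j; rewrite !mxE.
Qed.

Lemma dual_form (f : V -> V -> V) (G : 'I_n -> 'M[K]_n) u eta j :
  (forall u j, f u (@bvec K n j) = u *m G j) ->
  (dualop f u eta) 0 j = - form u (G j) eta.
Proof.
move=> h; rewrite mxE /pairing /form h; congr (- _).
rewrite mxE; apply: eq_bigr => k _; rewrite mxE mulrC.
by rewrite mxE.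
Qed.

Lemma formRl z (R M : 'M[K]_n) w : form (z *m R) M w = form z (R *m M) w.
Proof. by rewrite /form mulmxA. Qed.

Lemma formswap z (R M : 'M[K]_n) w : R^T = R ->
  form (w *m R) M z = form z (M^T *m R) w.
Proof. by move=> hR; rewrite formRl form_tr trmx_mul hR. Qed.

Lemma d_equiv (f g : V -> V -> V) (G H : 'I_n -> 'M[K]_n) (R : 'M[K]_n) :
  R^T = R ->
  (forall u j, f u (@bvec K n j) = u *m G j) ->
  (forall u j, g u (@bvec K n j) = u *m H j) ->
  ((forall z w, dualop f (z *m R) w = dualop g (w *m R) z) <->
   forall j, R *m G j - (H j)^T *m R = 0).
Proof.
move=> hR hf hg; split.
  move=> h j; apply: form0 => z w.
  have e : (dualop f (z *m R) w) 0 j = (dualop g (w *m R) z) 0 j by rewrite h.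
  move: e; rewrite (dual_form _ _ _ hf) (dual_form _ _ _ hg).
  move/oppr_inj; rewrite formRl (formswap _ _ _ hR) => e.
  by rewrite formB e subrr.
move=> h z w; apply/rowP => j; rewrite (dual_form _ _ _ hf) (dual_form _ _ _ hg).
congr (- _); apply/eqP; rewrite -subr_eq0.
by rewrite formRl (formswap _ _ _ hR) -formB h /form mulmx0 mul0mx mxE.
Qed.

Lemma mxof_first (f : V -> V -> V) x :
  (forall y, islin (fun x => f x y)) ->
  mxof (f x) = \sum_j x 0 j *: mxof (f (@bvec K n j)).
Proof.
move=> h; apply/matrixP => i b; rewrite summxE mxE (h (@bvec K n i) x) mxE.
by apply: eq_bigr => j _; rewrite !mxE.
Qed.

Lemma basis_all (X : V -> 'M[K]_n) :
  (forall x, X x = \sum_j x 0 j *: X (@bvec K n j)) ->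
  ((forall j, X (@bvec K n j) = 0) <-> forall x, X x = 0).
Proof.
move=> hX; split; last by move=> h j; apply: h.
by move=> h x; rewrite hX big1 // => j _; rewrite h scaler0.
Qed.

End H.

Unset Implicit Arguments.

Theorem mainTheorem10 (K : fieldType) (n : nat)
    (cs cp : 'I_n -> 'I_n -> 'rV[K]_n)
    (hA : anti_pre_Novikov (bil cs) (bil cp))
    (s : 'M[K]_n) :
  let succ := bil cs in
  let prec := bil cp in
  let T := Tmap (s + flip s) in
  let Pa := invariant_tensor succ prec (s + flip s) in
  let Pb := (forall (x zeta : 'rV[K]_n),
               T (dualop (L_succ succ) x zeta) + L_star succ prec x (T zeta) = 0) /\
            (forall (x zeta : 'rV[K]_n),
               T (dualop (L_circ succ prec) x zeta) + L_odot succ prec x (T zeta) = 0) in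
  let Pc := (forall (x zeta : 'rV[K]_n),
               L_succ succ x (T zeta) + T (dualop (L_star succ prec) x zeta) = 0) /\
            (forall (x zeta : 'rV[K]_n),
               T (dualop (L_odot succ prec) x zeta) + L_circ succ prec x (T zeta) = 0) in
  let Pd := (forall (zeta eta : 'rV[K]_n),
               dualop (L_star succ prec) (T zeta) eta = dualop (R_succ succ) (T eta) zeta) /\
            (forall (zeta eta : 'rV[K]_n),
               dualop (R_odot succ prec) (T zeta) eta = dualop (R_circ succ prec) (T eta) zeta) in
  (Pa <-> Pb) /\ (Pa <-> Pc) /\ (Pa <-> Pd).
Proof.
move=> succ prec T Pa Pb Pc Pd.
set R := s + flip s.
have hR : R^T = R by rewrite /R /flip linearD /= trmxK addrC.
have hTE : forall z, T z = z *m R by move=> z; rewrite /T TmapE.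
have hLs : forall x, islin (L_succ succ x) by move=> x; exact: bil_lin_r.
have hLc : forall x, islin (L_circ succ prec x).
  by move=> x; exact: (islinD (bil_lin_r _ _) (bil_lin_r _ _)).
have hLst : forall x, islin (L_star succ prec x).
  by move=> x; exact: (islinD (islinD (bil_lin_r _ _) (bil_lin_r _ _))
                              (islinD (bil_lin_l _ _) (bil_lin_l _ _))).
have hLo : forall x, islin (L_odot succ prec x).
  by move=> x; exact: (islinD (bil_lin_r _ _) (bil_lin_l _ _)).
have fLs : forall y, islin (fun x => L_succ succ x y) by move=> y; exact: bil_lin_l.
have fLc : forall y, islin (fun x => L_circ succ prec x y).
  by move=> y; exact: (islinD (bil_lin_l _ _) (bil_lin_l _ _)).
have fLst : forall y, islin (fun x => L_star succ prec x y).
  by move=> y; exact: (islinD (islinD (bil_lin_l _ _) (bil_lin_l _ _))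
                              (islinD (bil_lin_r _ _) (bil_lin_r _ _))).
have fLo : forall y, islin (fun x => L_odot succ prec x y).
  by move=> y; exact: (islinD (bil_lin_l _ _) (bil_lin_r _ _)).
pose S x := mxof (L_star succ prec x).
pose N x := mxof (L_succ succ x).
pose C x := mxof (L_circ succ prec x).
pose P x := mxof (L_odot succ prec x).
pose X1 x := R *m S x - (N x)^T *m R.
pose X2 x := (C x)^T *m R - R *m P x.
have core : Pa <-> (forall x, X1 x = 0) /\ (forall x, X2 x = 0).
  rewrite /Pa /invariant_tensor -/R; split.
    move=> h; split=> x; have [h1 h2] := h x.
      by move: h1; rewrite !tappE mxof_id trmx1 !mul1mx !mulmx1.
    by move: h2; rewrite !tappE mxof_id trmx1 !mul1mx !mulmx1.
  move=> [h1 h2] x; rewrite !tappE mxof_id trmx1 !mul1mx !mulmx1; split.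
    exact: h1.
  exact: h2.
have eb1 : forall x z, T (dualop (L_succ succ) x z) + L_star succ prec x (T z) = z *m X1 x.
  move=> x z; rewrite !hTE dualopE (hLst x) /X1 mulmxBr !mulmxA mulNmx addrC //.
have eb2 : forall x z, T (dualop (L_circ succ prec) x z) + L_odot succ prec x (T z) = - (z *m X2 x).
  move=> x z; rewrite !hTE dualopE (hLo x) /X2 mulmxBr !mulmxA mulNmx opprB addrC //.
have ec1 : forall x z, L_succ succ x (T z) + T (dualop (L_star succ prec) x z) = - (z *m (X1 x)^T).
  move=> x z; rewrite !hTE dualopE (hLs x) /X1 linearB /= !trmx_mul hR trmxK.
  by rewrite mulmxBr opprB !mulmxA mulNmx addrC.
have ec2 : forall x z, T (dualop (L_odot succ prec) x z) + L_circ succ prec x (T z) = z *m (X2 x)^T.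
  move=> x z; rewrite !hTE dualopE (hLc x) /X2 linearB /= !trmx_mul hR trmxK.
  by rewrite mulmxBr !mulmxA mulNmx addrC.
have trz : forall M : 'M[K]_n, M^T = 0 <-> M = 0.
  by move=> M; split=> [h|->]; [apply: trmx_inj; rewrite h trmx0 | rewrite trmx0].
have hb : Pb <-> (forall x, X1 x = 0) /\ (forall x, X2 x = 0).
  rewrite /Pb; split.
    move=> [h1 h2]; split=> x; apply/rowall0 => z.
      by rewrite -eb1 h1.
    by apply/eqP; rewrite -oppr_eq0 -eb2 h2.
  move=> [h1 h2]; split=> x z.
    by rewrite eb1 h1 mulmx0.
  by rewrite eb2 h2 mulmx0 oppr0.
have hc : Pc <-> (forall x, X1 x = 0) /\ (forall x, X2 x = 0).
  rewrite /Pc; split.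
    move=> [h1 h2]; split=> x; apply/trz; apply/rowall0 => z.
      by apply/eqP; rewrite -oppr_eq0 -ec1 h1.
    by rewrite -ec2 h2.
  move=> [h1 h2]; split=> x z.
    by rewrite ec1 h1 trmx0 mulmx0 oppr0.
  by rewrite ec2 h2 trmx0 mulmx0.
have eX1 : forall x, X1 x = \sum_j x 0 j *: X1 (@bvec K n j).
  move=> x; rewrite /X1 /S /N (mxof_first x fLst) (mxof_first x fLs).
  rewrite mulmx_sumr linear_sum /= mulmx_suml -sumrB; apply: eq_bigr => j _.
  by rewrite scalerBr -scalemxAr linearZ /= -scalemxAl.
have eX2 : forall x, X2 x = \sum_j x 0 j *: X2 (@bvec K n j).
  move=> x; rewrite /X2 /C /P (mxof_first x fLc) (mxof_first x fLo).
  rewrite mulmx_sumr linear_sum /= mulmx_suml -sumrB; apply: eq_bigr => j _.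
  by rewrite scalerBr -scalemxAr linearZ /= -scalemxAl.
have hd1 : (forall zeta eta, dualop (L_star succ prec) (T zeta) eta = dualop (R_succ succ) (T eta) zeta)
    <-> forall j, X1 (@bvec K n j) = 0.
  have := @d_equiv K n (L_star succ prec) (R_succ succ) (fun j => S (@bvec K n j))
     (fun j => N (@bvec K n j)) R hR.
  case.
  - move=> u j; rewrite -(hLst _ u) /L_star /addop /L_circ /R_circ /Lop /Rop addrC //.
  - move=> u j; exact: hLs.
  move=> i1 i2; split.
    by move=> h; apply: i1 => z w; have := h z w; rewrite !hTE.
  by move=> h z w; rewrite !hTE; apply: i2.
have hd2 : (forall zeta eta, dualop (R_odot succ prec) (T zeta) eta = dualop (R_circ succ prec) (T eta) zeta)
    <-> forall j, X2 (@bvec K n j) = 0.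
  have := @d_equiv K n (R_odot succ prec) (R_circ succ prec) (fun j => P (@bvec K n j))
     (fun j => C (@bvec K n j)) R hR.
  case.
  - move=> u j; exact: hLo.
  - move=> u j; exact: hLc.
  move=> i1 i2; split.
    move=> h j; apply/eqP; rewrite -oppr_eq0 /X2 opprB; apply/eqP.
    by apply: i1 => z w; have := h z w; rewrite !hTE.
  move=> h z w; rewrite !hTE; apply: i2 => j.
  by apply/eqP; rewrite -opprB oppr_eq0; apply/eqP; apply: h.
have hd : Pd <-> (forall x, X1 x = 0) /\ (forall x, X2 x = 0).
  have b1 := basis_all eX1; have b2 := basis_all eX2.
  rewrite /Pd; clear -hd1 hd2 b1 b2; tauto.
clear -core hb hc hd; tauto.
Qed.
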